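(* Let $Y$ be a random variable whose moment generating function $E[e^{tY}]$ exists for $|t|<r_0$ for some $r_0>0$. Let $(Y_j)_{j\ge1}$ be mutually independent copies of $Y$, $S_0=0$, $S_k=Y_1+\cdots+Y_k$ for $k\ge1$. Define the probabilistic bivariate Bell polynomials $\phi_n^Y(x,y)$ by $$\Big(1+y\big(E[e^{Yt}]-1\big)\Big)^{x}=\sum_{n=0}^{\infty}\phi_n^Y(x,y)\frac{t^n}{n!}.$$ Then for every $n\ge 0$, $$\phi_n^Y(x,y)=\sum_{k=0}^{n}{n\brace k}_Y (x)_k\, y^k,$$ where ${n\brace k}_Y=\frac{1}{k!}\sum_{i=0}^{k}\binom{k}{i}(-1)^{k-i}E[S_i^n]$ for $0\le k\le n$.
   Context: $(x)_0=1$, $(x)_k=x(x-1)\cdots(x-k+1)$ for $k\ge1$. The power $(1+u)^x$ is understood via the binomial series $\sum_{k\ge0}\binom{x}{k}u^k$, and the identity is one of power series in $t$; $x,y$ are variables. The numbers ${n\brace k}_Y$ are the probabilistic Stirling numbers of the second kind associated with $Y$. *)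

(* Defs.v *)
From HB Require Import structures.
From mathcomp Require Import all_boot all_order all_algebra.
From mathcomp Require Import all_classical all_reals all_analysis.
Set Implicit Arguments. Unset Strict Implicit. Unset Printing Implicit Defensive.
Import Order.TTheory GRing.Theory Num.Theory.
Import numFieldNormedType.Exports.
Local Open Scope classical_set_scope.
Local Open Scope ring_scope.

Section defs.
Context d (T : measurableType d) (R : realType) (P : probability T R).

Definition mutually_independent (X : nat -> {RV P >-> R}) : Prop :=
  forall (I : seq nat) (B : nat -> set R),
    uniq I -> (forall i, i \in I -> measurable (B i)) ->
    P (\bigcap_(i in [set j | j \in I]) (X i @^-1` B i)) =
    (\prod_(i <- I) P (X i @^-1` B i))%E.

Definition same_distribution (X X' : {RV P >-> R}) : Prop :=
  forall B : set R, measurable B -> P (X' @^-1` B) = P (X @^-1` B).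

(** S_k = Y_1 + ... + Y_k, where Y_{j+1} is [Ys j]; S_0 = 0 *)
Definition partial_sum (Ys : nat -> {RV P >-> R}) (k : nat) : T -> R :=
  fun w => \sum_(j < k) Ys j w.

(** E[S_i^n] (a real number; finite under the MGF hypothesis) *)
Definition sum_moment (Ys : nat -> {RV P >-> R}) (n i : nat) : R :=
  fine 'E_P[fun w => partial_sum Ys i w ^+ n].

Definition stirling2Y (Ys : nat -> {RV P >-> R}) (n k : nat) : R :=
  (k`!%:R)^-1 * \sum_(i < k.+1) 'C(k, i)%:R * (-1) ^+ (k - i) * sum_moment Ys n i.

(** coefficients of the formal power series E[e^{Yt}] = sum_m E[Y^m] t^m / m! *)
Definition mgf_coef (Y : {RV P >-> R}) (m : nat) : R :=
  fine 'E_P[fun w => Y w ^+ m] / m`!%:R.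

End defs.

(** Formal power series in t over R, as coefficient sequences. *)
Definition fps_one {R : ringType} : nat -> R := fun n => (n == 0)%:R.
Definition fps_mul {R : ringType} (a b : nat -> R) : nat -> R :=
  fun n => \sum_(i < n.+1) a i * b (n - i)%N.
Definition fps_exp {R : ringType} (a : nat -> R) (k : nat) : nat -> R :=
  iter k (fps_mul a) fps_one.

Definition falling {R : ringType} (x : R) (k : nat) : R :=
  \prod_(i < k) (x - i%:R).

Definition gbinom {R : fieldType} (x : R) (k : nat) : R := falling x k / k`!%:R.

(** phi_n^Y(x,y): n! times the coefficient of t^n in
    (1 + y (E[e^{Yt}] - 1))^x := sum_{k>=0} binom(x,k) (y (E[e^{Yt}] - 1))^k,
    the infinite sum over k taken as a limit of partial sums. *)
Definition bell_phiY d (T : measurableType d) (R : realType) (P : probability T R)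
  (Y : {RV P >-> R}) (n : nat) (x y : R) : R :=
  let u : nat -> R := fun m => y * (mgf_coef Y m - fps_one m) in
  n`!%:R * limn (series (fun k => gbinom x k * fps_exp u k n)).

(* Main.v *)
Require Import Defs.
From HB Require Import structures.
From mathcomp Require Import all_boot all_order all_algebra.
From mathcomp Require Import all_classical all_reals all_analysis.
From mathcomp Require Import measurable_realfun.
From mathcomp Require Import ring lra zify.
Set Implicit Arguments. Unset Strict Implicit. Unset Printing Implicit Defensive.
Import Order.TTheory GRing.Theory Num.Theory.
Import numFieldNormedType.Exports.
Import HBNNSimple.
Local Open Scope classical_set_scope.
Local Open Scope ring_scope.

Section simple_integral.
Context d (T : measurableType d) (R : realType) (P : probability T R).

Lemma H1 (D : set T) (F : T -> R) (h : {nnsfun R >-> R}) (Z : {RV P >-> R}) :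
  measurable D -> measurable_fun setT F -> (forall w, 0 <= F w) ->
  (\int[P]_(w in D) (h (Z w) * F w)%:E =
  \sum_(v <- finmap.enum_fset (fset_set (range h)))
     `|v|%:E * \int[P]_(w in D `&` (Z @^-1` (h @^-1` [set v]))) (F w)%:E)%E.
Proof.
move=> mD mF F0.
have hE y : h y = \sum_(v <- finmap.enum_fset (fset_set (range h)))
    (`|v| * \1_(h @^-1` [set v]) y).
  rewrite fimfunE fsbig_finite//=.
  apply: eq_big_seq => v; rewrite in_fset_set ?inE; last exact: fimfunP.
  by move=> [y0 _ <-]; rewrite ger0_norm.
transitivity (\int[P]_(w in D) (\sum_(v <- finmap.enum_fset (fset_set (range h)))
    (fun v w => (`|v| * (\1_(h @^-1` [set v]) (Z w) * F w))%:E) v w))%E.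
  apply: eq_integral => w _; rewrite hE big_distrl -sumEFin /=.
  by apply: eq_bigr => v _; rewrite mulrA.
rewrite ge0_integral_sum//; last first.
- move=> v w _; rewrite lee_fin mulr_ge0// mulr_ge0//.
- move=> v; apply/measurable_EFinP; apply: measurable_funM => //.
  apply: measurable_funM => //; apply: measurableT_comp => //.
  exact: measurable_funP.
apply: eq_bigr => v _.
under eq_integral do rewrite EFinM.
rewrite ge0_integralZl_EFin//; last 2 first.
- by move=> w _; rewrite lee_fin mulr_ge0.
- apply/measurable_EFinP; apply: measurable_funM => //.
  apply: measurableT_comp => //; exact: measurable_funP.
  exact: measurable_funS mF.
congr (_ * _)%E.
rewrite integral_mkcondr epatch_indic; apply: eq_integral => w _.
by rewrite /= -EFinM mulrC.
Qed.

End simple_integral.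

Section indep.
Context d (T : measurableType d) (R : realType) (P : probability T R).
Variable X : nat -> {RV P >-> R}.
Hypothesis indX : mutually_independent X.

Definition capJ (J : seq nat) (B : nat -> set R) : set T :=
  \bigcap_(i in [set j | j \in J]) (X i @^-1` B i).

Lemma capJ_nil B : capJ [::] B = setT.
Proof. by apply/seteqP; split => // w _ i /=; rewrite in_nil. Qed.

Lemma capJ_cons a J B : capJ (a :: J) B = X a @^-1` B a `&` capJ J B.
Proof.
apply/seteqP; split => w.
- move=> H; split; first by apply: H; rewrite /= mem_head.
  by move=> i /= iJ; apply: H; rewrite /= in_cons iJ orbT.
- move=> [Ha HJ] i /=; rewrite in_cons => /orP [/eqP -> // | iJ]; exact: HJ.
Qed.

Lemma capJ_meas J B : (forall i, measurable (B i)) -> measurable (capJ J B).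
Proof.
move=> mB; elim: J => [|a J IH]; first by rewrite capJ_nil.
by rewrite capJ_cons; apply: measurableI => //; exact: measurable_funPTI.
Qed.

Lemma capJ_ext J B B' : (forall i, i \in J -> B i = B' i) -> capJ J B = capJ J B'.
Proof.
move=> e; apply/seteqP; split => w H i /= iJ.
  by rewrite -e //; exact: H.
by rewrite e //; exact: H.
Qed.

Lemma capJ_prob J B : uniq J -> (forall i, measurable (B i)) ->
  P (capJ J B) = (\prod_(i <- J) P (X i @^-1` B i))%E.
Proof. by move=> uJ mB; apply: indX. Qed.



Lemma int1 (D : set T) : measurable D -> (\int[P]_(w in D) 1%:E = P D)%E.
Proof. by move=> mD; rewrite integral_cst // mul1e. Qed.

Lemma indep_nonneg (g : nat -> R -> R) :
  (forall i, measurable_fun setT (g i)) -> (forall i y, 0 <= g i y) ->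
  (forall i, \int[P]_w (g i (X i w))%:E < +oo)%E ->
  forall I J B, uniq (J ++ I) -> (forall i, measurable (B i)) ->
  (\int[P]_(w in capJ J B) (\prod_(i <- I) g i (X i w))%:E =
   P (capJ J B) * \prod_(i <- I) \int[P]_w (g i (X i w))%:E)%E.
Proof.
move=> mg g0 gfin; elim => [|a I IH] J B uJI mB.
  rewrite big_nil mule1.
  under eq_integral do rewrite big_nil.
  by rewrite int1 //; exact: capJ_meas.
have uaJI : uniq (a :: J ++ I).
  by rewrite -(perm_uniq (permEl (perm_catCA J [:: a] I))).
move: (uaJI) => /= /andP [aJI uJI'].
have aJ : a \notin J by apply: contra aJI; rewrite mem_cat => ->.
have uJ : uniq J by move: uJI'; rewrite cat_uniq => /and3P[].
set D := capJ J B.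
have mD : measurable D by exact: capJ_meas.
set F := fun w => \prod_(i <- I) g i (X i w).
have mF : measurable_fun setT F.
  by apply: measurable_prod => i _; apply: measurableT_comp.
have F0 w : 0 <= F w by apply: prodr_ge0 => i _.
set c := (\prod_(i <- I) \int[P]_w (g i (X i w))%:E)%E.
have cfin : c \is a fin_num.
  apply: prode_fin_num => i _; rewrite ge0_fin_numE ?gfin//.
  by apply: integral_ge0 => w _; rewrite lee_fin.
have c0 : (0 <= c)%E.
  by apply: prode_ge0 => i _; apply: integral_ge0 => w _; rewrite lee_fin.
have step1 (h : {nnsfun R >-> R}) :
  (\int[P]_(w in D) (h (X a w) * F w)%:E = P D * (\int[P]_w (h (X a w))%:E * c))%E.
  rewrite H1 //.
  rewrite (_ : \int[P]_w (h (X a w))%:E = \int[P]_(w in setT) (h (X a w) * (cst 1) w)%:E)%E;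
    last by apply: eq_integral => w _; rewrite mulr1.
  rewrite H1 //.
  have E1 v : (\int[P]_(w in setT `&` X a @^-1` (h @^-1` [set v])) (cst 1 w)%:E
      = P (X a @^-1` (h @^-1` [set v])))%E.
    by rewrite setTI int1 //; exact: measurable_funPTI.
  have E2 v : (\int[P]_(w in D `&` X a @^-1` (h @^-1` [set v])) (F w)%:E
      = P (X a @^-1` (h @^-1` [set v])) * P D * c)%E.
    pose B' := fun j => if j == a then h @^-1` [set v] else B j.
    have mB' i : measurable (B' i).
      by rewrite /B'; case: eqP => _ //; exact: measurable_funPTI.
    have eD : D = capJ J B'.
      apply: capJ_ext => i iJ; rewrite /B'; case: eqP => // eia.
      by move: aJ; rewrite -eia iJ.
    have -> : D `&` X a @^-1` (h @^-1` [set v]) = capJ (a :: J) B'.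
      by rewrite capJ_cons /B' eqxx setIC -eD.
    rewrite IH //; congr (_ * _)%E.
    rewrite capJ_prob //=; last by rewrite aJ uJ.
    rewrite big_cons /B' eqxx; congr (_ * _)%E.
    rewrite /D capJ_prob //; apply: eq_big_seq => i iJ.
    by case: eqP => // eia; move: aJ; rewrite -eia iJ.
  under eq_bigr do rewrite E2.
  under [in RHS]eq_bigr do rewrite E1.
  rewrite ge0_sume_distrl; last by move=> v _; apply: mule_ge0.
  rewrite ge0_sume_distrr; last by move=> v _; apply: mule_ge0 => //; apply: mule_ge0.
  apply: eq_bigr => v _.
  rewrite !muleA; congr (_ * c)%E.
  by rewrite muleC muleA.
have mga : measurable_fun setT (EFin \o g a) by apply/measurable_EFinP.
have ga0 : forall y, setT y -> (0 <= (EFin \o g a) y)%E.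
  by move=> y _; rewrite lee_fin.
pose hn := nnsfun_approx measurableT mga.
have hcvg y : (fun n => (hn n y)%:E) @ \oo --> (g a y)%:E.
  exact: (@cvg_nnsfun_approx _ _ _ _ measurableT _ mga ga0 y Logic.I).
have hnd y : {homo (fun n => hn n y) : n m / (n <= m)%N >-> n <= m}.
  by move=> n m nm; exact/lefP/nd_nnsfun_approx.
have hn0 n y : 0 <= hn n y by [].
have mhn n : measurable_fun setT (fun w => hn n (X a w)).
  by apply: measurableT_comp.
have L : (\int[P]_(w in D) (g a (X a w) * F w)%:E =
    limn (fun n => \int[P]_(w in D) (hn n (X a w) * F w)%:E))%E.
  rewrite -monotone_convergence //.
  - apply: eq_integral => w _; apply/esym/cvg_lim => //; rewrite EFinM.
    under eq_fun do rewrite EFinM.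
    by apply: cvgeZr => //; exact: hcvg.
  - move=> n; apply/measurable_EFinP; apply: measurable_funM.
      exact: measurable_funS (mhn n).
    exact: measurable_funS mF.
  - by move=> n w _; rewrite lee_fin mulr_ge0.
  - by move=> w _ n m nm; rewrite lee_fin ler_wpM2r //; apply: hnd.
have L2 : (\int[P]_w (g a (X a w))%:E =
    limn (fun n => \int[P]_w (hn n (X a w))%:E))%E.
  rewrite -monotone_convergence //.
  - by apply: eq_integral => w _; apply/esym/cvg_lim => //; exact: hcvg.
  - by move=> n; apply/measurable_EFinP.
  - by move=> n w _; rewrite lee_fin.
  - by move=> w _ n m nm; rewrite lee_fin; apply: hnd.
have cvgint : cvgn (fun n => \int[P]_w (hn n (X a w))%:E)%E.
  apply: ereal_nondecreasing_is_cvgn => n m nm.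
  apply: ge0_le_integral => //.
  - by move=> w _; rewrite lee_fin.
  - by apply/measurable_EFinP.
  - by apply/measurable_EFinP.
  - by move=> w _; rewrite lee_fin; apply: hnd.
rewrite big_cons.
under eq_integral do rewrite big_cons.
rewrite -/c -/F L L2 -limeMr // -limeMl //; last first.
- exact: is_cvgeZr.
- exact: fin_num_measure.
congr (limn _); apply/funext => n.
by rewrite step1.
Qed.

End indep.

Section indep2.
Context d (T : measurableType d) (R : realType) (P : probability T R).
Variable X : nat -> {RV P >-> R}.
Hypothesis indX : mutually_independent X.

Lemma Lfun_absfin (f : T -> R) : f \in Lfun P 1 ->
  (\int[P]_w (`|f w|)%:E < +oo)%E.
Proof.
move=> /Lfun1_integrable/integrableP[_] H.
by rewrite (eq_integral (fun x => `|(EFin \o f) x|)%E) // => w _.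
Qed.

Lemma Lfun_prod (g : nat -> R -> R) I : uniq I ->
  (forall i, measurable_fun setT (g i)) ->
  (forall i, (fun w => g i (X i w)) \in Lfun P 1) ->
  (fun w => \prod_(i <- I) g i (X i w)) \in Lfun P 1.
Proof.
move=> uI mg Lg.
apply/Lfun1_integrable/integrableP; split.
  apply/measurable_EFinP; apply: measurable_prod => i _; exact: measurableT_comp.
rewrite (eq_integral (fun w => (\prod_(i <- I) `|g i (X i w)|)%:E)); last first.
  by move=> w _; rewrite /comp abse_EFin normr_prod.
have := @indep_nonneg _ _ _ P X indX (fun i y => `|g i y|) _ _ _ I [::] (fun _ => setT) uI.
rewrite capJ_nil probability_setT mul1e => ->.
- rewrite ltey_eq prode_fin_num //= => i _.
  rewrite ge0_fin_numE; first exact: Lfun_absfin.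
  by apply: integral_ge0 => w _; rewrite lee_fin.
- by move=> i; apply: measurableT_comp => //; exact: normr_measurable.
- by [].
- by move=> i; exact: Lfun_absfin.
- by [].
Qed.

Lemma indep_prod (g : nat -> R -> R) I : uniq I ->
  (forall i, measurable_fun setT (g i)) ->
  (forall i, (fun w => g i (X i w)) \in Lfun P 1) ->
  ('E_P[fun w => (\prod_(i <- I) g i (X i w))%R] =
  \prod_(i <- I) 'E_P[fun w => g i (X i w)])%E.
Proof.
move=> uI.
suff : forall (K : seq nat) g, (forall i, measurable_fun setT (g i)) ->
  (forall i, (fun w => g i (X i w)) \in Lfun P 1) ->
  (forall i, i \in I -> i \notin K -> forall y, 0 <= g i y) ->
  ('E_P[fun w => (\prod_(i <- I) g i (X i w))%R] =
  \prod_(i <- I) 'E_P[fun w => g i (X i w)])%E.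
  by move=> H mg0 Lg0; apply: (H I) => // i ->.
elim => [|a K IH] {}g mg Lg g0.
  pose g' := fun i => (g i)^\+.
  have e1 i : i \in I -> g' i =1 g i.
    by move=> iI y; rewrite /g' /funrpos; apply/max_idPl; exact: g0.
  transitivity ('E_P[fun w => (\prod_(i <- I) g' i (X i w))%R])%E.
    by congr (expectation _ _); apply/funext => w; apply: eq_big_seq => i iI; rewrite e1.
  rewrite [in RHS](eq_big_seq (fun i => 'E_P[fun w => g' i (X i w)])%E); last first.
    by move=> i iI; congr (expectation _ _); apply/funext => w; rewrite e1.
  rewrite !expectation.unlock.
  have mg' i : measurable_fun setT (g' i) by exact: measurable_funrpos.
  have g'0 i y : 0 <= g' i y by exact: funrpos_ge0.
  have g'fin i : (\int[P]_w (g' i (X i w))%:E < +oo)%E.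
    have := Lg i.
    move=> /Lfun1_integrable/(integrable_funrpos measurableT)/integrableP[_].
    apply: le_lt_trans; apply: ge0_le_integral => //.
    + by move=> w _; rewrite lee_fin funrpos_ge0.
    + by apply/measurable_EFinP; apply: measurableT_comp => //; exact: measurable_funrpos.
    + apply: measurableT_comp; first exact: abse_measurable.
      by apply/measurable_EFinP; apply: measurable_funrpos; exact: measurableT_comp.
    + by move=> w _; rewrite /comp abse_EFin lee_fin ler_norm.
  have := @indep_nonneg _ _ _ P X indX g' mg' g'0 g'fin I [::] (fun _ => setT) uI (fun _ => measurableT).
  by rewrite capJ_nil probability_setT mul1e => ->.
have [aI|aI] := boolP (a \in I); last first.
  apply: IH => // i iI iK y; apply: g0 => //.
  rewrite in_cons negb_or iK andbT.
  by apply: contra aI => /eqP <-.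
pose gp := fun i => if i == a then (g a)^\+ else g i.
pose gm := fun i => if i == a then (g a)^\- else g i.
have mgp i : measurable_fun setT (gp i).
  by rewrite /gp; case: eqP => _ //; exact: measurable_funrpos.
have mgm i : measurable_fun setT (gm i).
  by rewrite /gm; case: eqP => _ //; exact: measurable_funrneg.
have Lgp i : (fun w => gp i (X i w)) \in Lfun P 1.
  rewrite /gp; case: eqP => [->|_] //; apply/Lfun1_integrable.
  by apply: (integrable_funrpos measurableT); exact/Lfun1_integrable.
have Lgm i : (fun w => gm i (X i w)) \in Lfun P 1.
  rewrite /gm; case: eqP => [->|_] //; apply/Lfun1_integrable.
  by apply: (integrable_funrneg measurableT); exact/Lfun1_integrable.
have nK i : i \in I -> i \notin K -> i != a -> forall y, 0 <= g i y.
  move=> iI iK ia; apply: g0 => //; by rewrite in_cons negb_or ia iK.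
have IHp := IH gp mgp Lgp.
have IHm := IH gm mgm Lgm.
have Lp := Lfun_prod uI mgp Lgp.
have Lm := Lfun_prod uI mgm Lgm.
have ga w : g a (X a w) = (g a)^\+ (X a w) - (g a)^\- (X a w).
  by have := congr1 (fun h => h (X a w)) (funrposBneg (g a)).
have eqF : (fun w => \prod_(i <- I) g i (X i w)) =
    (fun w => \prod_(i <- I) gp i (X i w)) \- (fun w => \prod_(i <- I) gm i (X i w)).
  apply/funext => w; rewrite /= (bigD1_seq a) //= [in RHS](bigD1_seq a) //=.
  rewrite [X in _ = _ - X](bigD1_seq a) //= /gp /gm eqxx.
  have -> : \prod_(i <- I | i != a) (if i == a then (g a)^\+ else g i) (X i w) =
      \prod_(i <- I | i != a) g i (X i w).
    by apply: eq_bigr => i /negbTE ->.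
  have -> : \prod_(i <- I | i != a) (if i == a then (g a)^\- else g i) (X i w) =
      \prod_(i <- I | i != a) g i (X i w).
    by apply: eq_bigr => i /negbTE ->.
  by rewrite -mulrBl ga.
rewrite eqF expectationB // IHp ?IHm; last first.
  move=> i iI iK y; rewrite /gp; case: eqP => [_|/eqP ia]; first exact: funrpos_ge0.
  exact: nK.
  move=> i iI iK y; rewrite /gm; case: eqP => [_|/eqP ia]; first exact: funrneg_ge0.
  exact: nK.
rewrite (bigD1_seq a) //= [X in (_ - X)%E](bigD1_seq a) //= [in RHS](bigD1_seq a) //=.
rewrite /gp /gm eqxx.
under eq_bigr => i ia do rewrite (negbTE ia).
under [X in (_ - _ * X)%E]eq_bigr => i ia do rewrite (negbTE ia).
have Lpa : (fun w => (g a)^\+ (X a w)) \in Lfun P 1 by have := Lgp a; rewrite /gp eqxx.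
have Lma : (fun w => (g a)^\- (X a w)) \in Lfun P 1 by have := Lgm a; rewrite /gm eqxx.
rewrite -muleBl; last first.
- by apply: fin_num_adde_defl; rewrite fin_numN; exact: expectation_fin_num.
- by apply: prode_fin_num => i _; exact: expectation_fin_num.
congr (_ * _)%E.
rewrite -expectationB //; congr (expectation _ _); apply/funext => w.
by rewrite /= ga.
Qed.

End indep2.

Section moments.
Context d (T : measurableType d) (R : realType) (P : probability T R).

Lemma ge0_dist (Y Z : {RV P >-> R}) (f : R -> \bar R) :
  same_distribution Y Z -> measurable_fun setT f -> (forall y, (0 <= f y)%E) ->
  (\int[P]_w f (Z w) = \int[P]_w f (Y w))%E.
Proof.
move=> sd mf f0.
rewrite -[LHS](ge0_integral_distribution Z mf f0) -[RHS](ge0_integral_distribution Y mf f0).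
apply: eq_measure_integral => A mA _.
by rewrite /= /distribution /pushforward sd.
Qed.

Lemma dist_Lfun (Y Z : {RV P >-> R}) (h : R -> R) :
  same_distribution Y Z -> measurable_fun setT h ->
  (fun w => h (Y w)) \in Lfun P 1 -> (fun w => h (Z w)) \in Lfun P 1.
Proof.
move=> sd mh /Lfun_absfin fin; apply/Lfun1_integrable/integrableP; split.
  by apply/measurable_EFinP; exact: measurableT_comp.
rewrite (eq_integral (fun w => (fun y => (`|h y|)%:E) (Z w))); last first.
  by move=> w _; rewrite /comp abse_EFin.
rewrite (@ge0_dist Y Z (fun y => (`|h y|)%:E)) //.
by apply/measurable_EFinP; apply: measurableT_comp => //; exact: normr_measurable.
Qed.

Lemma dist_E (Y Z : {RV P >-> R}) (h : R -> R) :
  same_distribution Y Z -> measurable_fun setT h ->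
  ('E_P[fun w => h (Z w)] = 'E_P[fun w => h (Y w)])%E.
Proof.
move=> sd mh; rewrite !expectation.unlock integralE [RHS]integralE !funerpos !funerneg.
congr (_ - _)%E.
  apply: (@ge0_dist Y Z (fun y => (h^\+ y)%:E)) => //.
  - by apply/measurable_EFinP; exact: measurable_funrpos.
  - by move=> y; rewrite lee_fin funrpos_ge0.
apply: (@ge0_dist Y Z (fun y => (h^\- y)%:E)) => //.
- by apply/measurable_EFinP; exact: measurable_funrneg.
- by move=> y; rewrite lee_fin funrneg_ge0.
Qed.

Lemma exp_Lfun (Y : {RV P >-> R}) t : 'M_P Y t \is a fin_num ->
  (fun w => expR (Y w * t)) \in Lfun P 1.
Proof.
rewrite /mmt_gen_fun expectation.unlock => fin.
apply/Lfun1_integrable/integrableP; split.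
  apply/measurable_EFinP; apply: measurableT_comp; first exact: measurable_expR.
  by apply: measurable_funM => //; exact: measurable_cst.
rewrite (eq_integral (fun w => ((expR \o t \o* Y) w)%:E)); last first.
  by move=> w _; rewrite /comp abse_EFin gtr0_norm ?expR_gt0.
by rewrite ltey_eq fin.
Qed.

Lemma moment_bound (s y : R) m : 0 < s ->
  `|y ^+ m| <= m`!%:R / s ^+ m * (expR (y * s) + expR (y * - s)).
Proof.
move=> s0.
have e2 : expR (y * s) + expR (y * - s) >= 0 by rewrite addr_ge0 ?expR_ge0.
have eabs : expR (`|y| * s) <= expR (y * s) + expR (y * - s).
  have [y0|y0] := leP 0 y.
    by rewrite ger0_norm // lerDl expR_ge0.
  by rewrite ltr0_norm // mulNr -mulrN lerDr expR_ge0.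
case: m => [|n].
  rewrite expr0 normr1 fact0 expr0 divr1 mul1r.
  have h1 := expR_ge1Dx (y * s); have h2 := expR_ge1Dx (y * - s).
  rewrite mulrN in h2 *; lra.
have := expR_ge1Dxn n (mulr_ge0 (normr_ge0 y) (ltW s0)).
move=> h; have h' : (`|y| * s) ^+ n.+1 / n.+1`!%:R <= expR (y * s) + expR (y * - s).
  by apply: le_trans eabs; lra.
rewrite normrX.
have -> : `|y| ^+ n.+1 = n.+1`!%:R / s ^+ n.+1 * ((`|y| * s) ^+ n.+1 / n.+1`!%:R).
  rewrite exprMn; field.
  by rewrite pnatr_eq0 -lt0n fact_gt0 /= gt_eqF // exprn_gt0.
by apply: ler_wpM2l => //; rewrite divr_ge0 // ?exprn_ge0 ?ltW.
Qed.

Lemma moment_Lfun (Y : {RV P >-> R}) :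
  (exists2 r0 : R, 0 < r0 & forall t : R, `|t| < r0 -> 'M_P Y t \is a fin_num) ->
  forall m, (fun w => Y w ^+ m) \in Lfun P 1.
Proof.
move=> [r0 r0pos H] m.
set s := r0 / 2.
have s0 : 0 < s by rewrite divr_gt0.
have sr : s < r0 by rewrite /s; lra.
have L1 := exp_Lfun (H s ltac:(by rewrite gtr0_norm)).
have L2 := exp_Lfun (H (- s) ltac:(by rewrite normrN gtr0_norm)).
set C := m`!%:R / s ^+ m.
have iF : P.-integrable setT (EFin \o (fun w => C * (expR (Y w * s) + expR (Y w * - s)))).
  rewrite (_ : EFin \o _ = fun w => (C%:E * (((EFin \o (fun w => expR (Y w * s))) \+
      (EFin \o (fun w => expR (Y w * - s)))) w))%E); last first.
    by apply/funext => w; rewrite /= EFinM EFinD.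
  apply: integrableZl => //; apply: integrableD => //; exact/Lfun1_integrable.
apply/Lfun1_integrable; apply: le_integrable iF => //.
  by apply/measurable_EFinP; apply: measurable_funX.
move=> w _; rewrite /comp !abse_EFin lee_fin.
apply: le_trans (moment_bound _ m s0) _; exact: ler_norm.
Qed.

End moments.

Lemma sum_ord_iota (R : ringType) (F : nat -> R) i :
  \sum_(j < i) F j = \sum_(j <- iota 0 i) F j.
Proof. by rewrite -(big_mkord xpredT) /index_iota subn0. Qed.

Section poly_rep.
Context d (T : measurableType d) (R : realType) (P : probability T R).

Lemma Lfun_sum (I : Type) (s : seq I) (a : I -> R) (f : I -> T -> R) :
  (forall i, f i \in Lfun P 1) ->
  (fun w => \sum_(i <- s) a i * f i w) \in Lfun P 1.
Proof.
move=> Lf; elim: s => [|x s IH].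
  rewrite (_ : (fun w => _) = cst 0); last by apply/funext => w; rewrite big_nil.
  exact: Lfun_cst.
rewrite (_ : (fun w => _) = (fun w => f x w * a x) \+ (fun w => \sum_(i <- s) a i * f i w)).
  apply/Lfun1_integrable; rewrite (_ : EFin \o _ = (EFin \o (a x \o* f x)) \+ (EFin \o (fun w => (\sum_(i <- s) a i * f i w)%R)))%E; last first.
    by apply/funext => w; rewrite /= EFinD.
  apply: integrableD => //; apply/Lfun1_integrable => //.
  exact: Lfun_scale.
by apply/funext => w; rewrite big_cons /= mulrC.
Qed.

Lemma fine_prod (I : Type) (s : seq I) (f : I -> \bar R) :
  (forall i, f i \is a fin_num) -> fine (\prod_(i <- s) f i)%E = \prod_(i <- s) fine (f i).
Proof.
move=> ff; elim: s => [|x s IH]; first by rewrite !big_nil.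
rewrite !big_cons fineM ?IH //; exact: prode_fin_num.
Qed.

Lemma RE_sum (I : Type) (s : seq I) (a : I -> R) (f : I -> T -> R) :
  (forall i, f i \in Lfun P 1) ->
  fine 'E_P[fun w => \sum_(i <- s) a i * f i w] = \sum_(i <- s) a i * fine 'E_P[f i].
Proof.
move=> Lf; elim: s => [|x s IH].
  rewrite (_ : (fun w => _) = cst 0); last by apply/funext => w; rewrite big_nil.
  by rewrite expectation_cst big_nil.
rewrite (_ : (fun w => _) = (a x \o* f x) \+ (fun w => \sum_(i <- s) a i * f i w)); last first.
  by apply/funext => w; rewrite big_cons /= mulrC.
rewrite expectationD //; last by apply: Lfun_sum.
  2: exact: Lfun_scale.
rewrite fineD; last 2 first.
- by apply: expectation_fin_num; exact: Lfun_scale.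
- by apply: expectation_fin_num; exact: Lfun_sum.
by rewrite IH expectationZl // big_cons fineM // ?expectation_fin_num.
Qed.

Variable X : nat -> {RV P >-> R}.
Hypothesis indX : mutually_independent X.
Hypothesis LX : forall j m, (fun w => X j w ^+ m) \in Lfun P 1.

Definition mono (c : nat -> nat) (i : nat) (w : T) : R :=
  \prod_(j <- iota 0 i) X j w ^+ c j.

Lemma mXn n : measurable_fun setT (fun y : R => y ^+ n).
Proof. exact: measurable_funX. Qed.

Lemma Lfun_mono c i : mono c i \in Lfun P 1.
Proof.
exact: (@Lfun_prod _ _ _ P X indX (fun j y => y ^+ c j) (iota 0 i) (iota_uniq 0 i)
  (fun j => mXn (c j)) (fun j => LX j (c j))).
Qed.

Lemma RE_mono c i : fine 'E_P[mono c i] = \prod_(j <- iota 0 i) fine 'E_P[fun w => X j w ^+ c j].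
Proof.
rewrite /mono (@indep_prod _ _ _ P X indX (fun j y => y ^+ c j) (iota 0 i) (iota_uniq 0 i)
  (fun j => mXn (c j)) (fun j => LX j (c j))).
by rewrite fine_prod // => j; exact: expectation_fin_num.
Qed.

Definition rep (i : nat) (F : T -> R) :=
  exists s : seq (R * (nat -> nat)), forall w, F w = \sum_(p <- s) p.1 * mono p.2 i w.

Lemma rep_Lfun i F : rep i F -> F \in Lfun P 1.
Proof.
move=> [s Fs]; rewrite (_ : F = fun w => \sum_(p <- s) p.1 * mono p.2 i w); last exact/funext.
by apply: Lfun_sum => p; exact: Lfun_mono.
Qed.

Lemma RE_factor i F k : rep i F ->
  fine 'E_P[fun w => F w * X i w ^+ k] = fine 'E_P[F] * fine 'E_P[fun w => X i w ^+ k].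
Proof.
move=> [s Fs].
pose upd (c : nat -> nat) j := if j == i then k else c j.
have eM c w : mono c i w * X i w ^+ k = mono (upd c) i.+1 w.
  rewrite /mono -addn1 iotaD big_cat /= big_seq1 /upd eqxx add0n.
  congr (_ * _); apply: eq_big_seq => j; rewrite mem_iota add0n => /andP[_ ji].
  by rewrite ltn_eqF.
rewrite (_ : (fun w => F w * X i w ^+ k) =
    fun w => \sum_(p <- s) p.1 * mono (upd p.2) i.+1 w); last first.
  by apply/funext => w; rewrite Fs big_distrl /=; apply: eq_bigr => p _; rewrite -mulrA eM.
rewrite (_ : F = fun w => \sum_(p <- s) p.1 * mono p.2 i w); last exact/funext.
rewrite !RE_sum; try by move=> p; exact: Lfun_mono.
rewrite big_distrl /=; apply: eq_bigr => p _; rewrite -mulrA; congr (_ * _).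
rewrite !RE_mono -addn1 iotaD big_cat /= big_seq1 add0n /upd eqxx; congr (_ * _).
apply: eq_big_seq => j; rewrite mem_iota add0n => /andP[_ ji].
by rewrite ltn_eqF.
Qed.

Lemma rep_S i m : rep i (fun w => partial_sum X i w ^+ m).
Proof.
elim: m => [|m [s Fs]].
  exists [:: (1, fun _ => 0%N)] => w; rewrite big_seq1 /= mul1r expr0 /mono.
  by rewrite big1 // => j _; rewrite expr0.
pose bump (c : nat -> nat) j l := (c l + (l == j))%N.
exists [seq (p.1, bump p.2 j) | p <- s, j <- iota 0 i] => w.
rewrite big_allpairs_dep /= exprSr Fs big_distrl /=; apply: eq_bigr => p _.
have -> : partial_sum X i w = \sum_(j <- iota 0 i) X j w.
  exact: sum_ord_iota.
rewrite mulr_sumr; apply: eq_big_seq => j ji.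
rewrite -mulrA; congr (_ * _).
rewrite /mono /bump [RHS](eq_bigr (fun l => X l w ^+ p.2 l * X l w ^+ (l == j))); last first.
  by move=> l _; rewrite exprD.
rewrite big_split /=; congr (_ * _).
rewrite (bigD1_seq j) ?iota_uniq //= eqxx expr1 big1 ?mulr1 // => l /negbTE ->.
by rewrite expr0.
Qed.

End poly_rep.

Section fps.
Variable (R : fieldType).

Lemma fps_exp_coef (n : nat) (a : nat -> R) k m : (m <= n)%N ->
  fps_exp a k m = ((\poly_(i < n.+1) a i) ^+ k)`_m.
Proof.
elim: k m => [|k IH] m mn.
  by rewrite expr0 coef1 /fps_exp /= /fps_one.
rewrite exprS coefM /fps_exp /= /fps_mul; apply: eq_bigr => j _.
rewrite coef_poly -/(fps_exp a k (m - j)) IH; last by rewrite (leq_trans (leq_subr _ _)).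
have jn : (j < n.+1)%N by rewrite ltnS (leq_trans _ mn) // -ltnS.
by rewrite jn.
Qed.

Lemma sign_coef j (p : {poly R}) m : ((-1) ^+ j * p)`_m = (-1) ^+ j * p`_m.
Proof.
elim: j => [|j IH]; first by rewrite !expr0 !mul1r.
by rewrite !exprS -!mulrA !mulN1r coefN IH.
Qed.

Lemma coef_low (q : {poly R}) k m : q`_0 = 0 -> (m < k)%N -> (q ^+ k)`_m = 0.
Proof.
move=> q0; elim: k m => [|k IH] m //.
move=> mk; rewrite exprS coefM big1 // => [[j /= jm]] _.
case: j jm => [|j] jm; first by rewrite q0 mul0r.
rewrite IH ?mulr0 //.
by move: jm mk; lia.
Qed.

End fps.

Section main.
Context d (T : measurableType d) (R : realType) (P : probability T R).
Variables (Y : {RV P >-> R}) (Ys : nat -> {RV P >-> R}).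
Hypothesis mgf : exists2 r0 : R, 0 < r0 & forall t : R, `|t| < r0 -> 'M_P Y t \is a fin_num.
Hypothesis sd : forall j, same_distribution Y (Ys j).
Hypothesis indY : mutually_independent Ys.

Let mu m := fine 'E_P[fun w => Y w ^+ m].

Lemma LYs j m : (fun w => Ys j w ^+ m) \in Lfun P 1.
Proof.
exact: (dist_Lfun (sd j) (@mXn R m) (moment_Lfun mgf m)).
Qed.

Lemma EYs j m : fine 'E_P[fun w => Ys j w ^+ m] = mu m.
Proof. by rewrite /mu (dist_E (sd j) (@mXn R m)). Qed.

Lemma rep_mulX i F k : rep Ys i F -> rep Ys i.+1 (fun w => F w * Ys i w ^+ k).
Proof.
move=> [s Fs].
pose upd (c : nat -> nat) j := if j == i then k else c j.
exists [seq (p.1, upd p.2) | p <- s] => w.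
rewrite Fs big_map big_distrl /=; apply: eq_bigr => p _; rewrite -mulrA; congr (_ * _).
rewrite /mono -addn1 iotaD big_cat /= big_seq1 /upd eqxx add0n.
congr (_ * _); apply: eq_big_seq => j; rewrite mem_iota add0n => /andP[_ ji].
by rewrite ltn_eqF.
Qed.

Lemma sm_rec n i : sum_moment Ys n i.+1 =
  \sum_(l < n.+1) 'C(n, l)%:R * (sum_moment Ys (n - l) i * mu l).
Proof.
rewrite /sum_moment.
have -> : (fun w => partial_sum Ys i.+1 w ^+ n) =
    fun w => \sum_(l < n.+1) 'C(n, l)%:R * (partial_sum Ys i w ^+ (n - l) * Ys i w ^+ l).
  apply/funext => w; rewrite /partial_sum big_ord_recr /= exprDn.
  by apply: eq_bigr => l _; rewrite mulr_natl.
rewrite RE_sum; last first.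
  by move=> l; apply: (rep_Lfun indY LYs); apply: rep_mulX; exact: rep_S.
apply: eq_bigr => l _; congr (_ * _).
by rewrite (RE_factor indY LYs) ?EYs //; exact: rep_S.
Qed.

Lemma fps_sm n i : n`!%:R * fps_exp (mgf_coef Y) i n = sum_moment Ys n i.
Proof.
elim: i n => [|i IH] n.
  rewrite /fps_exp /= /fps_one /sum_moment.
  have -> : (fun w => partial_sum Ys 0 w ^+ n) = cst ((n == 0)%:R : R).
    by apply/funext => w; rewrite /partial_sum big_ord0 expr0n.
  by rewrite expectation_cst /=; case: n => [|n]; rewrite ?fact0 ?mul1r ?mulr0.
rewrite sm_rec /fps_exp iterS -/(fps_exp _ i) /fps_mul mulr_sumr.
apply: eq_bigr => [[k /= kn]] _.
rewrite -IH /mgf_coef -/(mu k).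
have hb : n`!%:R = 'C(n, k)%:R * k`!%:R * (n - k)`!%:R :> R.
  by rewrite -!natrM -mulnA bin_fact.
rewrite hb; field.
by rewrite pnatr_eq0 -lt0n fact_gt0.
Qed.

End main.

Local Close Scope classical_set_scope.

Theorem theorem2p1 (d : measure_display) (T : measurableType d) (R : realType)
  (P : probability T R) (Y : {RV P >-> R}) (Ys : nat -> {RV P >-> R}) :
  (exists2 r0 : R, 0 < r0 & forall t : R, `|t| < r0 -> 'M_P Y t \is a fin_num) ->
  (forall j, same_distribution Y (Ys j)) ->
  mutually_independent Ys ->
  forall (n : nat) (x y : R),
    bell_phiY Y n x y = \sum_(k < n.+1) stirling2Y Ys n k * falling x k * y ^+ k.
Proof.
move=> mgf sd indY n x y.
set a := mgf_coef Y.
have a0 : a 0 = 1.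
  rewrite /a /mgf_coef (_ : (fun w => Y w ^+ 0) = cst 1); last first.
    by apply/funext => w; rewrite expr0.
  by rewrite expectation_cst fact0 divr1.
set u := fun m => y * (a m - fps_one m).
pose pa := \poly_(i < n.+1) a i.
have pu : \poly_(i < n.+1) u i = y *: (pa - 1).
  apply/polyP => m; rewrite coefZ coefB coef1 !coef_poly /u /fps_one.
  case: ltnP => // mn.
  have -> : (m == 0%N) = false by apply/negbTE; rewrite -lt0n (leq_trans _ mn).
  by rewrite subrr mulr0.
have q0 : (pa - 1)`_0 = 0 by rewrite coefB coef1 coef_poly /= a0 subrr.
have ue k : fps_exp u k n = y ^+ k * ((pa - 1) ^+ k)`_n.
  by rewrite (@fps_exp_coef _ n) // pu exprZn coefZ.
rewrite /bell_phiY /= -/a -/u.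
have lim : limn (series (fun k => gbinom x k * fps_exp u k n)) =
    \sum_(k < n.+1) gbinom x k * fps_exp u k n.
  apply: (lim_near_cst (@Rhausdorff R)); near=> N.
  have hN : (n.+1 <= N)%N by near: N; exists n.+1.
  rewrite /series /= (big_cat_nat _ hN) //=.
  rewrite [X in _ + X](_ : _ = 0) ?addr0; first by rewrite big_mkord.
  rewrite big_nat_cond; apply: big1 => k /andP[/andP[nk _] _].
  by rewrite ue coef_low ?mulr0.
rewrite lim mulr_sumr; apply: eq_bigr => [[k /= kn]] _.
rewrite ue /stirling2Y /gbinom.
have eq : ((pa - 1) ^+ k)`_n =
    \sum_(i < k.+1) 'C(k, i)%:R * ((-1) ^+ (k - i) * fps_exp a i n).
  rewrite (addrC pa (-1)) exprDn coef_sum; apply: eq_bigr => i _.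
  by rewrite coefMn sign_coef -(@fps_exp_coef _ n) // mulr_natl.
have eS : \sum_(i < k.+1) 'C(k, i)%:R * (-1) ^+ (k - i) * sum_moment Ys n i =
    n`!%:R * \sum_(i < k.+1) 'C(k, i)%:R * ((-1) ^+ (k - i) * fps_exp a i n).
  rewrite mulr_sumr; apply: eq_bigr => i _; rewrite -(fps_sm mgf sd indY n i) -/a.
  ring.
rewrite eq eS; field.
by rewrite pnatr_eq0 -lt0n fact_gt0.
Unshelve. all: by end_near.
Qed.
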